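(* Let $F$ and $G$ be objects in $\overline{\mathrm{Pro}}(\mathcal{C})$. Then every connected component of the poset of 1-morphisms from $F$ to $G$ (that is, every morphism from $F$ to $G$ in $\overline{\mathrm{Pro}}(\mathcal{C})$) is directed.
   Context: Let $\mathcal{C}$ be a category. Objects of $\overline{\mathrm{Pro}}(\mathcal{C})$ are diagrams $F:A\to\mathcal{C}$ with $A$ a cofinite directed poset of infinite height (poset as category with $u\to v$ iff $u\ge v$; cofinite: each $\{z\le x\}$ finite; infinite height: every element has a strictly larger one). A 1-morphism $F^A\to G^B$ is a pair $(\alpha,\phi)$ with $\alpha:B\to A$ strictly increasing and $\phi:F\circ\alpha\to G$ a natural transformation; 1-morphisms are partially ordered by $(\alpha',\phi')\geq(\alpha,\phi)$ iff $\alpha'(b)\ge\alpha(b)$ and $\phi'_b=\phi_b\circ F(\alpha'(b)\to\alpha(b))$ for all $b\in B$. Morphisms $F\to G$ in $\overline{\mathrm{Pro}}(\mathcal{C})$ are the connected components of this poset. *)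

(* Defs.v *)
From Stdlib Require Import List Relations.
Set Implicit Arguments.
Unset Strict Implicit.

(* A (locally Type-valued) category.  [comp g f] is  g o f. *)
Record Category := {
  Obj :> Type;
  Hom : Obj -> Obj -> Type;
  idm : forall x, Hom x x;
  comp : forall x y z, Hom y z -> Hom x y -> Hom x z;
  comp_id_l : forall x y (f : Hom x y), comp (idm y) f = f;
  comp_id_r : forall x y (f : Hom x y), comp f (idm x) = f;
  comp_assoc : forall w x y z (h : Hom y z) (g : Hom x y) (f : Hom w x),
      comp h (comp g f) = comp (comp h g) f
}.
Arguments Hom {c} _ _.
Arguments idm {c} _.
Arguments comp {c x y z} _ _.

Record CDPoset := {
  carrier :> Type;
  le : carrier -> carrier -> Prop;
  le_refl : forall x, le x x;
  le_antisym : forall x y, le x y -> le y x -> x = y;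
  le_trans : forall x y z, le x y -> le y z -> le x z;
  dir_inhabited : inhabited carrier;
  dir_ub : forall x y, exists z, le x z /\ le y z;
  cofinite : forall x, exists l : list carrier, forall z, le z x -> In z l;
  inf_height : forall x, exists y, le x y /\ x <> y
}.
Arguments le {c} _ _.

Definition lt {A : CDPoset} (x y : A) : Prop := le x y /\ x <> y.

(* Objects of \overline{Pro}(C): diagrams F : A -> C, where A is viewed as a
   category with an arrow u -> v iff u >= v, i.e. [le v u]. *)
Record ProObj (C : Category) := {
  idx : CDPoset;
  Fo : idx -> C;
  Fm : forall u v : idx, le v u -> Hom (Fo u) (Fo v);
  Fm_id : forall u (h : le u u), Fm h = idm (Fo u);
  Fm_comp : forall u v w (h1 : le v u) (h2 : le w v) (h3 : le w u),
      Fm h3 = comp (Fm h2) (Fm h1)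
}.
Arguments idx {C} _.
Arguments Fo {C} _ _.
Arguments Fm {C} _ {u v} _.

Record OneMor (C : Category) (F G : ProObj C) := {
  alpha : idx G -> idx F;
  alpha_strict : forall b b' : idx G, lt b b' -> lt (alpha b) (alpha b');
  phi : forall b : idx G, Hom (Fo F (alpha b)) (Fo G b);
  phi_nat : forall (b b' : idx G) (h : le b' b) (h' : le (alpha b') (alpha b)),
      comp (Fm G h) (phi b) = comp (phi b') (Fm F h')
}.
Arguments alpha {C F G} _ _.
Arguments phi {C F G} _ _.

Definition mor_le {C : Category} {F G : ProObj C} (m m' : OneMor F G) : Prop :=
  forall b : idx G, exists h : le (alpha m b) (alpha m' b),
      phi m' b = comp (phi m b) (Fm F h).

Definition connected {C : Category} {F G : ProObj C} : OneMor F G -> OneMor F G -> Prop :=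
  clos_refl_sym_trans (OneMor F G) mor_le.

(* A connected component (given by a representative m) is directed:
   it is nonempty (it contains m) and any two of its elements have an upper
   bound inside it. *)
Definition component_directed {C : Category} {F G : ProObj C} (m : OneMor F G) : Prop :=
  forall m1 m2, connected m m1 -> connected m m2 ->
    exists m3, connected m m3 /\ mor_le m1 m3 /\ mor_le m2 m3.

(* Main.v *)
Require Import Defs.
From Stdlib Require Import List Relations Classical ClassicalEpsilon Lia.

Definition ub2 {A : CDPoset} (x y : A) : A :=
  proj1_sig (constructive_indefinite_description _ (dir_ub x y)).
Lemma ub2_l {A : CDPoset} (x y : A) : le x (ub2 x y).
Proof. unfold ub2; destruct (constructive_indefinite_description _ _) as [z [H1 H2]]; exact H1. Qed.
Lemma ub2_r {A : CDPoset} (x y : A) : le y (ub2 x y).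
Proof. unfold ub2; destruct (constructive_indefinite_description _ _) as [z [H1 H2]]; exact H2. Qed.

Lemma inh_ex (A : CDPoset) : exists a : A, True.
Proof. destruct (dir_inhabited A) as [a]; exists a; trivial. Qed.
Definition a0 (A : CDPoset) : A :=
  proj1_sig (constructive_indefinite_description _ (inh_ex A)).

Fixpoint ubl {A : CDPoset} (l : list A) : A :=
  match l with nil => a0 A | x :: l => ub2 x (ubl l) end.
Lemma ubl_spec {A : CDPoset} (l : list A) x : In x l -> le x (ubl l).
Proof.
  induction l as [|y l IH]; simpl; [tauto|].
  intros [<-|H]; [apply ub2_l|]. exact (le_trans (IH H) (ub2_r _ _)).
Qed.

Definition succ {A : CDPoset} (x : A) : A :=
  proj1_sig (constructive_indefinite_description _ (inf_height x)).
Lemma succ_lt {A : CDPoset} (x : A) : lt x (succ x).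
Proof. unfold succ; destruct (constructive_indefinite_description _ _) as [z H]; exact H. Qed.

Lemma lt_mix {A : CDPoset} (x y z w : A) : le x y -> lt y z -> le z w -> lt x w.
Proof.
  intros H1 [H2 H3] H4. split.
  - exact (le_trans (le_trans H1 H2) H4).
  - intros ->. apply H3. apply le_antisym; [exact H2|]. exact (le_trans H4 H1).
Qed.

Lemma lb_ex0 {B : CDPoset} (b : B) (L : list B) :
  exists l, NoDup l /\ forall z, In z l <-> (In z L /\ le z b).
Proof.
  induction L as [|x L [l [Hn Hl]]].
  - exists nil; split; [constructor|]. simpl; tauto.
  - destruct (classic (le x b /\ ~ In x l)) as [[Hx Hni]|Hno].
    + exists (x :: l); split; [constructor; auto|].
      intros z; simpl; rewrite Hl. split.
      * intros [<-|[? ?]]; auto.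
      * intros [[<-|?] ?]; auto.
    + exists l; split; [auto|]. intros z; rewrite Hl; simpl. split.
      * intros [? ?]; auto.
      * intros [[Hxz|Hi] Hle]; [|split; auto].
        subst z. destruct (classic (In x l)) as [Hi|Hi]; [apply Hl in Hi; tauto|].
        exfalso; apply Hno; auto.
Qed.

Lemma lb_ex {B : CDPoset} (b : B) : exists l, NoDup l /\ forall z, In z l <-> le z b.
Proof.
  destruct (cofinite b) as [L HL]. destruct (lb_ex0 b L) as [l [Hn Hl]].
  exists l; split; auto. intros z; rewrite Hl; split; [tauto|]. auto.
Qed.

Definition lb {B : CDPoset} (b : B) : list B :=
  proj1_sig (constructive_indefinite_description _ (lb_ex b)).
Lemma lb_spec {B : CDPoset} (b : B) : NoDup (lb b) /\ forall z, In z (lb b) <-> le z b.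
Proof. unfold lb; destruct (constructive_indefinite_description _ _) as [l H]; exact H. Qed.
Definition rk {B : CDPoset} (b : B) : nat := length (lb b).

Lemma rk_lt {B : CDPoset} (b' b : B) : lt b' b -> S (rk b') <= rk b.
Proof.
  intros [Hle Hne]. unfold rk.
  destruct (lb_spec b') as [N' S']. destruct (lb_spec b) as [N Sb].
  change (S (length (lb b'))) with (length (b :: lb b')).
  apply NoDup_incl_length.
  - constructor; auto. intros Hi. apply S' in Hi. apply Hne. apply le_antisym; auto.
  - intros z [<-|Hz]. apply Sb, le_refl. apply Sb. apply S' in Hz. exact (le_trans Hz Hle).
Qed.


Fixpoint W {A B : CDPoset} (f g : B -> A) (n : nat) (b : B) : A :=
  match n with
  | 0 => ub2 (f b) (g b)
  | S n => ub2 (W f g n b) (ub2 (ub2 (f b) (g b)) (ubl (map (fun b' => succ (W f g n b')) (lb b))))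
  end.

Lemma W_fg {A B : CDPoset} (f g : B -> A) n b : le (f b) (W f g n b) /\ le (g b) (W f g n b).
Proof.
  destruct n; simpl.
  - split; [apply ub2_l|apply ub2_r].
  - split.
    + exact (le_trans (ub2_l _ _) (le_trans (ub2_l _ _) (ub2_r _ _))).
    + exact (le_trans (ub2_r _ _) (le_trans (ub2_l _ _) (ub2_r _ _))).
Qed.

Lemma W_mono {A B : CDPoset} (f g : B -> A) n m b : n <= m -> le (W f g n b) (W f g m b).
Proof.
  induction 1. apply le_refl. simpl. exact (le_trans IHle (ub2_l _ _)).
Qed.

Lemma W_succ {A B : CDPoset} (f g : B -> A) n b' b : le b' b ->
  le (succ (W f g n b')) (W f g (S n) b).
Proof.
  intros H. simpl. refine (le_trans _ (le_trans (ub2_r _ _) (ub2_r _ _))).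
  apply ubl_spec. apply (in_map (fun b0 => succ (W f g n b0))). apply (proj2 (lb_spec b)). exact H.
Qed.

Definition aW {A B : CDPoset} (f g : B -> A) (b : B) : A := W f g (rk b) b.

Lemma aW_strict {A B : CDPoset} (f g : B -> A) b' b : lt b' b -> lt (aW f g b') (aW f g b).
Proof.
  intros H. pose proof (rk_lt _ _ H) as Hr. unfold aW.
  destruct (rk b) as [|k] eqn:E; [lia|].
  apply (lt_mix _ _ _ _ (W_mono f g _ _ b' (le_S_n _ _ Hr)) (succ_lt _)).
  apply W_succ. apply H.
Qed.

Lemma Fm_pi {C : Category} (F : ProObj C) {u v} (h h' : le v u) : Fm F h = Fm F h'.
Proof.
  rewrite (Fm_comp h (le_refl v) h'), Fm_id, comp_id_l. reflexivity.
Qed.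

Lemma Fm_cc {C : Category} (F : ProObj C) {u v w} (h1 : le v u) (h2 : le w v) (h3 : le w u) :
  comp (Fm F h2) (Fm F h1) = Fm F h3.
Proof. symmetry; apply Fm_comp. Qed.

Lemma alpha_mono {C : Category} {F G : ProObj C} (m : OneMor F G) b' b :
  le b' b -> le (alpha m b') (alpha m b).
Proof.
  intros H. destruct (classic (b' = b)) as [->|Hn]. apply le_refl.
  apply (alpha_strict m (conj H Hn)).
Qed.

Lemma mor_le_refl {C : Category} {F G : ProObj C} (m : OneMor F G) : mor_le m m.
Proof.
  intros b. exists (le_refl _). rewrite Fm_id, comp_id_r. reflexivity.
Qed.

Lemma mor_le_trans {C : Category} {F G : ProObj C} (x y z : OneMor F G) :
  mor_le x y -> mor_le y z -> mor_le x z.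
Proof.
  intros H1 H2 b. destruct (H1 b) as [h1 E1]. destruct (H2 b) as [h2 E2].
  exists (le_trans h1 h2). rewrite E2, E1, <- comp_assoc, (Fm_cc F h2 h1 (le_trans h1 h2)).
  reflexivity.
Qed.

Lemma hmW {C : Category} {F G : ProObj C} {m u : OneMor F G} (v : OneMor F G) (Hu : mor_le m u) b :
  le (alpha m b) (aW (alpha u) (alpha v) b).
Proof.
  destruct (Hu b) as [h _]. exact (le_trans h (proj1 (W_fg _ _ _ _))).
Qed.

Lemma upper_nat {C : Category} {F G : ProObj C} (m u v : OneMor F G) (Hu : mor_le m u)
  (b b' : idx G) (h : le b' b) (h' : le (aW (alpha u) (alpha v) b') (aW (alpha u) (alpha v) b)) :
  comp (Fm G h) (comp (phi m b) (Fm F (hmW v Hu b))) =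
  comp (comp (phi m b') (Fm F (hmW v Hu b'))) (Fm F h').
Proof.
  pose proof (alpha_mono m _ _ h) as k.
  rewrite comp_assoc, (phi_nat (o:=m) h k), <- !comp_assoc.
  f_equal.
  rewrite (Fm_cc F (hmW v Hu b) k (le_trans k (hmW v Hu b))).
  rewrite (Fm_cc F h' (hmW v Hu b') (le_trans k (hmW v Hu b))). reflexivity.
Qed.

Definition upper {C : Category} {F G : ProObj C} (m u v : OneMor F G) (Hu : mor_le m u)
  : OneMor F G :=
  {| alpha := aW (alpha u) (alpha v);
     alpha_strict := aW_strict (alpha u) (alpha v);
     phi := fun b => comp (phi m b) (Fm F (hmW v Hu b));
     phi_nat := upper_nat m u v Hu |}.

Lemma upper_ub {C : Category} {F G : ProObj C} (m u v : OneMor F G) (Hu : mor_le m u)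
  (Hv : mor_le m v) : mor_le u (upper m u v Hu) /\ mor_le v (upper m u v Hu).
Proof.
  split; intros b; simpl.
  - destruct (Hu b) as [k E].
    exists (proj1 (W_fg (alpha u) (alpha v) (rk b) b)).
    rewrite E, <- comp_assoc. f_equal. symmetry. apply Fm_cc.
  - destruct (Hv b) as [k E].
    exists (proj2 (W_fg (alpha u) (alpha v) (rk b) b)).
    rewrite E, <- comp_assoc. f_equal. symmetry. apply Fm_cc.
Qed.

Lemma conn_ub {C : Category} {F G : ProObj C} (x y : OneMor F G) :
  connected x y -> exists z, mor_le x z /\ mor_le y z.
Proof.
  induction 1 as [x y H|x|x y _ [z [H1 H2]]|x y z _ [p [H1 H2]] _ [q [H3 H4]]].
  - exists y; split; auto. apply mor_le_refl.
  - exists x; split; apply mor_le_refl.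
  - exists z; auto.
  - destruct (upper_ub _ _ _ H2 H3) as [Hp Hq].
    eexists; split; [exact (mor_le_trans _ _ _ H1 Hp)|exact (mor_le_trans _ _ _ H4 Hq)].
Qed.

Theorem corollary3p7 (C : Category) (F G : ProObj C) (m : OneMor F G) :
  component_directed m.
Proof.
  intros m1 m2 H1 H2.
  destruct (conn_ub _ _ (rst_trans _ _ _ _ _ (rst_sym _ _ _ _ H1) H2)) as [z [Hz1 Hz2]].
  exists z; split; auto.
  exact (rst_trans _ _ _ _ _ H1 (rst_step _ _ _ _ Hz1)).
Qed.
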